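(* Let $m\in\mathbb{N}$ and let $f\in C^m_{\mathrm{pol}}(\mathbb{R})$ be increasing, with $|f^{(n)}(x)|\lesssim1+|x|^p$ for all $n=0,1,\dots,m$. For $\lambda>0$ let $J_\lambda:=(I+\lambda f)^{-1}$ and $f_\lambda:=\lambda^{-1}(I-J_\lambda)$. Then: (i) $f_\lambda$ and $J_\lambda$ belong to $C^m(\mathbb{R})$; (ii) for $\lambda\le1$ there exists $q\in\mathbb{N}$, independent of $\lambda$, such that $|f^{(n)}_\lambda(x)|\lesssim1+|x|^q$ for all $n=0,1,\dots,m$ (with implicit constant independent of $\lambda$); (iii) $f^{(n)}_\lambda\to f^{(n)}$ pointwise as $\lambda\to0$, for $n=0,1,\dots,m$.
   Context: $f_\lambda$ is the Yosida approximation of the increasing function $f$ and $J_\lambda$ its resolvent. $C^m_{\mathrm{pol}}(\mathbb{R})$ is the space of $\phi\in C^m(\mathbb{R})$ with $\phi,\phi',\dots,\phi^{(m)}$ of polynomial growth. *)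

(* Defs.v *)
From Stdlib Require Import Reals ClassicalEpsilon.
From Coquelicot Require Import Coquelicot.
Open Scope R_scope.

(* g is of class C^m on R: the iterated derivatives Derive_n g k exist
   everywhere for k < m (so Derive_n g (k+1) is the genuine derivative of
   Derive_n g k) and the m-th derivative is continuous. *)
Definition Cm (m : nat) (g : R -> R) : Prop :=
  (forall (k : nat) (x : R), (k < m)%nat -> ex_derive (Derive_n g k) x) /\
  (forall x : R, continuous (Derive_n g m) x).

Definition nondecreasing (f : R -> R) : Prop := forall x y, x <= y -> f x <= f y.

(* Resolvent J_lam = (I + lam f)^{-1}: J_lam y is the (unique, for f continuous
   non-decreasing and lam > 0) solution x of x + lam * f x = y. *)
Definition resolvent (f : R -> R) (lam : R) (y : R) : R :=
  epsilon (inhabits 0) (fun x => x + lam * f x = y).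

Definition yosida (f : R -> R) (lam : R) (y : R) : R :=
  (y - resolvent f lam y) / lam.

(* Main.v *)
Require Import Defs.
From Stdlib Require Import Reals Lra Lia FunctionalExtensionality ClassicalEpsilon Ranalysis5.
From Coquelicot Require Import Coquelicot.
Open Scope R_scope.

Inductive ex := EY | EL | EW | EF (i : nat) | EC (r : R) | EAdd (a b : ex) | EMul (a b : ex).

Definition Wf (f : R -> R) l y := / (1 + l * Derive_n f 1 y).

Fixpoint ev (f : R -> R) l y e : R :=
  match e with
  | EY => y | EL => l | EW => Wf f l y | EF i => Derive_n f i y | EC r => r
  | EAdd a b => ev f l y a + ev f l y b
  | EMul a b => ev f l y a * ev f l y b end.

Fixpoint dx e := match e with
  | EY => EC 1 | EL => EC 0
  | EW => EMul (EC (-1)) (EMul EL (EMul (EF 2) (EMul EW EW)))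
  | EF i => EF (S i) | EC _ => EC 0
  | EAdd a b => EAdd (dx a) (dx b)
  | EMul a b => EAdd (EMul (dx a) b) (EMul a (dx b)) end.

Definition Dx e := EMul (dx e) EW.

Fixpoint mi e : nat := match e with
  | EY | EL | EC _ => 0%nat | EW => 1%nat | EF i => i
  | EAdd a b | EMul a b => Nat.max (mi a) (mi b) end.

Lemma mi_dx e : (mi (dx e) <= S (mi e))%nat.
Proof. induction e; simpl; lia. Qed.

Lemma mi_Dx e : (mi (Dx e) <= S (mi e))%nat.
Proof. unfold Dx; cbn [mi]; pose proof (mi_dx e). apply Nat.max_lub; [exact H| apply le_n_S, Nat.le_0_l]. Qed.

Lemma mi_iter n e : (mi (Nat.iter n Dx e) <= n + mi e)%nat.
Proof. induction n; [simpl; lia|]. change (Nat.iter (S n) Dx e) with (Dx (Nat.iter n Dx e)). pose proof (mi_Dx (Nat.iter n Dx e)); lia. Qed.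

Lemma is_derive_eq (g : R -> R) x l l' : is_derive g x l -> l = l' -> is_derive g x l'.
Proof. intros H ->; exact H. Qed.

Lemma dconst (a x : R) : is_derive (fun _ : R => a) x 0.
Proof. exact (is_derive_const (K:=R_AbsRing) (V:=R_NormedModule) a x). Qed.

Lemma dplus (g h : R -> R) x a b : is_derive g x a -> is_derive h x b ->
  is_derive (fun t => g t + h t) x (a + b).
Proof. intros; apply (is_derive_plus (K:=R_AbsRing) (V:=R_NormedModule)); auto. Qed.

Lemma dmult (g h : R -> R) x a b : is_derive g x a -> is_derive h x b ->
  is_derive (fun t => g t * h t) x (a * h x + g x * b).
Proof. intros; apply (is_derive_mult (K:=R_AbsRing)); auto. intros; apply Rmult_comm. Qed.

Lemma deriv_ev f l y k e : (mi e <= k)%nat ->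
  (forall i, (i <= k)%nat -> ex_derive (Derive_n f i) y) ->
  ((1 <= k)%nat -> 1 + l * Derive_n f 1 y <> 0) ->
  is_derive (fun y => ev f l y e) y (ev f l y (dx e)).
Proof.
  intros Hk Hd Hw; induction e; simpl in *.
  - exact (is_derive_id (K:=R_AbsRing) y).
  - apply dconst.
  - assert (H1: is_derive (fun y => 1 + l * Derive_n f 1 y) y (l * Derive_n f 2 y)).
    { eapply is_derive_eq. apply dplus. apply dconst.
      apply is_derive_scal. apply (Derive_correct (Derive_n f 1)). apply Hd; lia.
      simpl. ring. }
    eapply is_derive_eq. apply is_derive_inv. exact H1. apply Hw; lia.
    unfold Wf; cbv beta; simpl. field. apply Hw; lia.
  - apply (Derive_correct (Derive_n f i)). apply Hd; lia.
  - apply dconst.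
  - eapply is_derive_eq. apply dplus. apply IHe1; lia. apply IHe2; lia. reflexivity.
  - eapply is_derive_eq. apply dmult. apply IHe1; lia. apply IHe2; lia. reflexivity.
Qed.
Section Res.
Variable f : R -> R.
Hypothesis fc : forall x, continuous f x.
Hypothesis fm : nondecreasing f.
Variable lam : R.
Hypothesis hl : 0 < lam.

Lemma res_exists y : exists x, x + lam * f x = y.
Proof.
  set (a := y - lam * Rabs (f y)). set (b := y + lam * Rabs (f y)).
  assert (hab : a <= b) by (unfold a, b; pose proof (Rabs_pos (f y)); nra).
  assert (Ha : a + lam * f a <= y).
  { assert (f a <= f y) by (apply fm; unfold a; pose proof (Rabs_pos (f y)); nra).
    unfold a at 1. pose proof (Rle_abs (f y)). nra. }
  assert (Hb : y <= b + lam * f b).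
  { assert (f y <= f b) by (apply fm; unfold b; pose proof (Rabs_pos (f y)); nra).
    unfold b at 1. pose proof (Rle_abs (- f y)). rewrite Rabs_Ropp in H0. nra. }
  destruct (IVT_gen (fun x => x + lam * f x) a b y) as [x [_ Hx]].
  - intro t. apply continuity_pt_filterlim.
    apply (continuous_plus (fun x => x) (fun x => lam * f x)). apply continuous_id.
    apply (continuous_scal_r lam f). apply fc.
  - rewrite Rmin_left, Rmax_right; lra.
  - exists x; exact Hx.
Qed.

Lemma res_spec y : resolvent f lam y + lam * f (resolvent f lam y) = y.
Proof.
  unfold resolvent. apply (epsilon_spec (inhabits 0) (fun x => x + lam * f x = y)).
  apply res_exists.
Qed.

Lemma res_mono x y : x <= y -> resolvent f lam x <= resolvent f lam y.
Proof.
  intros H. pose proof (res_spec x); pose proof (res_spec y).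
  destruct (Rle_dec (resolvent f lam x) (resolvent f lam y)) as [|n]; auto.
  assert (f (resolvent f lam y) <= f (resolvent f lam x)) by (apply fm; lra).
  nra.
Qed.

Lemma res_lip x y : Rabs (resolvent f lam x - resolvent f lam y) <= Rabs (x - y).
Proof.
  assert (K: forall x y, x <= y -> 0 <= resolvent f lam y - resolvent f lam x <= y - x).
  { intros u v H. pose proof (res_mono u v H). pose proof (res_spec u); pose proof (res_spec v).
    assert (f (resolvent f lam u) <= f (resolvent f lam v)) by (apply fm; lra). nra. }
  destruct (Rle_dec x y) as [H|H].
  - specialize (K x y H). rewrite Rabs_minus_sym, (Rabs_minus_sym x y).
    rewrite !Rabs_right; lra.
  - assert (y <= x) by lra. specialize (K y x H0). rewrite !Rabs_right; lra.
Qed.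

Lemma res_yos y : yosida f lam y = f (resolvent f lam y).
Proof. unfold yosida. pose proof (res_spec y). field_simplify_eq; lra. Qed.

Lemma res_near y : Rabs (resolvent f lam y - y) <= lam * Rabs (f y).
Proof.
  pose proof (res_spec y). set (z := resolvent f lam y) in *.
  destruct (Rle_dec z y) as [H1|H1].
  - assert (f z <= f y) by (apply fm; lra).
    assert (0 <= f z) by nra.
    replace (z - y) with (- (lam * f z)) by lra. rewrite Rabs_Ropp, Rabs_mult, (Rabs_right lam) by lra.
    apply Rmult_le_compat_l; [lra|]. rewrite (Rabs_right (f z)) by lra.
    pose proof (Rle_abs (f y)); lra.
  - assert (f y <= f z) by (apply fm; lra).
    assert (f z <= 0) by nra.
    replace (z - y) with (- (lam * f z)) by lra. rewrite Rabs_Ropp, Rabs_mult, (Rabs_right lam) by lra.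
    apply Rmult_le_compat_l; [lra|]. rewrite (Rabs_left1 (f z)) by lra.
    pose proof (Rle_abs (- f y)); rewrite Rabs_Ropp in *; lra.
Qed.

Lemma res_bound y : Rabs (resolvent f lam y) <= Rabs y + lam * Rabs (f 0).
Proof.
  pose proof (res_lip y 0). pose proof (res_near 0).
  replace (y - 0) with y in H by lra.
  pose proof (Rabs_triang (resolvent f lam y - resolvent f lam 0) (resolvent f lam 0 - 0)).
  replace (resolvent f lam y - resolvent f lam 0 + (resolvent f lam 0 - 0)) with (resolvent f lam y) in H1 by ring.
  lra.
Qed.

Lemma res_cont y : continuous (resolvent f lam) y.
Proof.
  apply continuity_pt_filterlim. intros e he. exists e; split; auto.
  intros x [_ Hx]. simpl in *. unfold R_dist in *. pose proof (res_lip x y); lra.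
Qed.

End Res.

Lemma ex_derive_lim (g : R -> R) x : ex_derive g x -> derivable_pt_lim g x (Derive g x).
Proof. intro H. apply is_derive_Reals. apply (Derive_correct g x H). Qed.

Lemma deriv_nonneg (g : R -> R) : (forall x, ex_derive g x) -> nondecreasing g ->
  forall x, 0 <= Derive g x.
Proof.
  intros Hd Hm x.
  set (pr := fun t => exist (fun l => derivable_pt_lim g t l) (Derive g t) (ex_derive_lim g t (Hd t)) : derivable_pt g t).
  pose proof (nonneg_derivative_0 g pr Hm x).
  replace (Derive g x) with (derive_pt g x (pr x)); auto.
Qed.

Lemma res_deriv (f : R -> R) lam (hl : 0 < lam) (fm : nondecreasing f)
  (fd : forall x, ex_derive f x) y :
  is_derive (resolvent f lam) y (/ (1 + lam * Derive f (resolvent f lam y))).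
Proof.
  assert (fc : forall x, continuous f x) by (intro; apply (ex_derive_continuous (K:=R_AbsRing) (V:=R_NormedModule)); auto).
  set (phi := fun t => t + lam * f t).
  assert (Hphi : forall t, derivable_pt_lim phi t (1 + lam * Derive f t)).
  { intro t. apply is_derive_Reals. unfold phi.
    apply dplus. exact (is_derive_id (K:=R_AbsRing) t). apply is_derive_scal.
    apply Derive_correct; auto. }
  set (Prf := fun a (_ : resolvent f lam (y-1) <= a <= resolvent f lam (y+1)) =>
     exist (fun l => derivable_pt_lim phi a l) _ (Hphi a) : derivable_pt phi a).
  assert (Hinc : resolvent f lam (y-1) <= resolvent f lam y <= resolvent f lam (y+1)).
  { split; apply res_mono; auto; lra. }
  pose proof (Dpos := deriv_nonneg f fd fm (resolvent f lam y)).
  assert (Hne : derive_pt phi (resolvent f lam y) (Prf (resolvent f lam y) Hinc) <> 0).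
  { simpl. nra. }
  pose proof (derivable_pt_lim_recip_interv phi (resolvent f lam) (y-1) (y+1) y Prf
     (proj2 (continuity_pt_filterlim _ _) (res_cont f fc fm lam hl y)) ltac:(lra) ltac:(lra) Hinc
     (fun x _ => res_spec f fc fm lam hl x) Hne) as H.
  apply is_derive_Reals. simpl in H. unfold Rdiv in H. rewrite Rmult_1_l in H. exact H.
Qed.

Lemma lim_plus {T} (F : (T -> Prop) -> Prop) {FF : Filter F} (a b : T -> R) x y :
  filterlim a F (locally x) -> filterlim b F (locally y) ->
  filterlim (fun t => a t + b t) F (locally (x + y)).
Proof. intros; eapply filterlim_comp_2; eauto. apply (filterlim_plus (K:=R_AbsRing) (V:=R_NormedModule)). Qed.

Lemma lim_mult {T} (F : (T -> Prop) -> Prop) {FF : Filter F} (a b : T -> R) x y :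
  filterlim a F (locally x) -> filterlim b F (locally y) ->
  filterlim (fun t => a t * b t) F (locally (x * y)).
Proof. intros; eapply filterlim_comp_2; eauto. apply (filterlim_mult (K:=R_AbsRing)). Qed.

Lemma lim_inv {T} (F : (T -> Prop) -> Prop) {FF : Filter F} (a : T -> R) x :
  filterlim a F (locally x) -> x <> 0 ->
  filterlim (fun t => / a t) F (locally (/ x)).
Proof.
  intros H Hx. eapply filterlim_comp; eauto.
  apply (continuous_Rinv_comp (fun y => y) x). apply continuous_id. exact Hx.
Qed.

Lemma lim_ev f {T} (F : (T -> Prop) -> Prop) {FF : Filter F} (lm yy : T -> R) l0 y0 k e :
  (mi e <= k)%nat -> filterlim lm F (locally l0) -> filterlim yy F (locally y0) ->
  (forall i, (i <= k)%nat -> continuous (Derive_n f i) y0) ->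
  ((1 <= k)%nat -> 1 + l0 * Derive_n f 1 y0 <> 0) ->
  filterlim (fun t => ev f (lm t) (yy t) e) F (locally (ev f l0 y0 e)).
Proof.
  intros Hk Hl Hy Hc Hw. induction e; simpl in *.
  - exact Hy.
  - exact Hl.
  - unfold Wf. apply lim_inv; try exact FF. 2: (apply Hw; lia).
    apply lim_plus; try exact FF. apply filterlim_const. apply lim_mult; try exact FF. exact Hl.
    eapply filterlim_comp. exact Hy. apply Hc; lia.
  - eapply filterlim_comp. exact Hy. apply Hc; lia.
  - apply filterlim_const.
  - apply lim_plus; try exact FF; [apply IHe1|apply IHe2]; lia.
  - apply lim_mult; try exact FF; [apply IHe1|apply IHe2]; lia.
Qed.

Fixpoint cb (B : R) e : R := match e with
  | EY | EL | EW | EF _ => B | EC r => Rabs r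
  | EAdd a b => cb B a + cb B b | EMul a b => cb B a * cb B b end.
Fixpoint db e : nat := match e with
  | EY | EL | EW | EF _ => 1%nat | EC _ => 0%nat
  | EAdd a b => Nat.max (db a) (db b) | EMul a b => (db a + db b)%nat end.

Lemma cb_pos B e : 0 <= B -> 0 <= cb B e.
Proof. intro; induction e; simpl; auto using Rabs_pos, Rplus_le_le_0_compat, Rmult_le_pos. Qed.

Lemma bound_ev f B N l y k e : (mi e <= k)%nat -> 1 <= N -> 0 <= B ->
  Rabs y <= B * N -> Rabs l <= B * N ->
  (forall i, (i <= k)%nat -> Rabs (Derive_n f i y) <= B * N) ->
  ((1 <= k)%nat -> Rabs (Wf f l y) <= B * N) ->
  Rabs (ev f l y e) <= cb B e * N ^ db e.
Proof.
  intros Hk HN HB Hy Hl Hf Hw. induction e; simpl in *; try rewrite Rmult_1_r.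
  - exact Hy.
  - exact Hl.
  - apply Hw; lia.
  - apply Hf; lia.
  - lra.
  - pose proof (IHe1 ltac:(lia)); pose proof (IHe2 ltac:(lia)).
    pose proof (Rle_pow N (db e1) (Nat.max (db e1) (db e2)) HN ltac:(lia)).
    pose proof (Rle_pow N (db e2) (Nat.max (db e1) (db e2)) HN ltac:(lia)).
    pose proof (cb_pos B e1 HB); pose proof (cb_pos B e2 HB).
    eapply Rle_trans. apply Rabs_triang.
    assert (cb B e1 * N ^ db e1 <= cb B e1 * N ^ Nat.max (db e1) (db e2)) by (apply Rmult_le_compat_l; auto).
    assert (cb B e2 * N ^ db e2 <= cb B e2 * N ^ Nat.max (db e1) (db e2)) by (apply Rmult_le_compat_l; auto).
    lra.
  - pose proof (IHe1 ltac:(lia)); pose proof (IHe2 ltac:(lia)).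
    rewrite Rabs_mult, pow_add.
    replace (cb B e1 * cb B e2 * (N ^ db e1 * N ^ db e2)) with
      ((cb B e1 * N ^ db e1) * (cb B e2 * N ^ db e2)) by ring.
    apply Rmult_le_compat; auto using Rabs_pos.
Qed.

Section Main.
Variable m : nat.
Variable f : R -> R.
Hypothesis Hcm : Cm m f.
Hypothesis Hf : nondecreasing f.

Lemma Dn_cont i x : (i <= m)%nat -> continuous (Derive_n f i) x.
Proof.
  intro H. destruct (Nat.eq_dec i m) as [->|Hn].
  - apply (proj2 Hcm).
  - apply (ex_derive_continuous (K:=R_AbsRing) (V:=R_NormedModule)).
    apply (proj1 Hcm); lia.
Qed.

Lemma fcont x : continuous f x.
Proof. apply (Dn_cont 0 x); lia. Qed.

Lemma Dpos y : (1 <= m)%nat -> 0 <= Derive_n f 1 y.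
Proof.
  intro H. apply (deriv_nonneg f); auto.
  intro x. apply (proj1 Hcm 0%nat x). lia.
Qed.

Lemma Wne l y : 0 <= l -> (1 <= m)%nat -> 1 + l * Derive_n f 1 y <> 0.
Proof. intros. pose proof (Dpos y H0). nra. Qed.

Lemma derive_J_e lam e k x : 0 < lam -> (mi e <= k)%nat -> (k < m)%nat ->
  is_derive (fun x => ev f lam (resolvent f lam x) e) x
            (ev f lam (resolvent f lam x) (Dx e)).
Proof.
  intros hl Hk Hkm.
  eapply is_derive_eq.
  apply (is_derive_comp (fun y => ev f lam y e) (resolvent f lam)).
  - apply (deriv_ev f lam _ k e Hk).
    + intros i Hi. apply (proj1 Hcm); lia.
    + intros. apply Wne; [lra|lia].
  - apply res_deriv; auto. intro t. apply (proj1 Hcm 0%nat t). lia.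
  - unfold Dx. simpl. unfold Wf. simpl. apply Rmult_comm.
Qed.

Lemma Dn_J_e lam e0 : 0 < lam -> mi e0 = 0%nat -> forall n, (n <= m)%nat -> forall x,
  Derive_n (fun x => ev f lam (resolvent f lam x) e0) n x =
  ev f lam (resolvent f lam x) (Nat.iter n Dx e0).
Proof.
  intros hl He0. induction n; intros Hn x; [reflexivity|].
  change (Nat.iter (S n) Dx e0) with (Dx (Nat.iter n Dx e0)).
  simpl. rewrite (Derive_ext _ (fun x => ev f lam (resolvent f lam x) (Nat.iter n Dx e0))).
  - apply is_derive_unique. apply (derive_J_e lam _ n); auto.
    pose proof (mi_iter n e0); lia.
  - intro; apply IHn; lia.
Qed.

Lemma Cm_G lam e0 : 0 < lam -> mi e0 = 0%nat ->
  Cm m (fun x => ev f lam (resolvent f lam x) e0).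
Proof.
  intros hl He0. split.
  - intros k x Hk.
    rewrite (functional_extensionality _ _ (Dn_J_e lam e0 hl He0 k ltac:(lia))).
    eexists. apply (derive_J_e lam _ k); auto. pose proof (mi_iter k e0); lia.
  - intro x.
    rewrite (functional_extensionality _ _ (Dn_J_e lam e0 hl He0 m ltac:(lia))).
    apply (lim_ev f (locally x) (fun _ => lam) (resolvent f lam) lam (resolvent f lam x) m).
    + pose proof (mi_iter m e0); lia.
    + apply filterlim_const.
    + apply res_cont; auto using fcont.
    + intros; apply Dn_cont; auto.
    + intros; apply Wne; [lra|lia].
Qed.

Lemma yos_eq lam : 0 < lam -> yosida f lam = fun x => ev f lam (resolvent f lam x) (EF 0).
Proof.
  intro hl. apply functional_extensionality. intro x. simpl. apply res_yos; auto using fcont.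
Qed.

Lemma ev0 n : (n <= m)%nat -> forall y, ev f 0 y (Nat.iter n Dx (EF 0)) = Derive_n f n y.
Proof.
  induction n; intros Hn y; [reflexivity|].
  change (Nat.iter (S n) Dx (EF 0)) with (Dx (Nat.iter n Dx (EF 0))).
  simpl. rewrite (Derive_ext _ (fun y => ev f 0 y (Nat.iter n Dx (EF 0)))).
  2: { intro; symmetry; apply IHn; lia. }
  symmetry. apply is_derive_unique. eapply is_derive_eq.
  apply (deriv_ev f 0 y n). pose proof (mi_iter n (EF 0)); simpl in *; lia.
  intros. apply (proj1 Hcm); lia.
  intros. rewrite Rmult_0_l. lra.
  unfold Wf. rewrite Rmult_0_l, Rplus_0_r, Rinv_1, Rmult_1_r. reflexivity.
Qed.

End Main.

Lemma pow_split t q : 0 <= t -> (1 + t) ^ q <= 2 ^ q * (1 + t ^ q).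
Proof.
  intro ht. pose proof (pow_le t q ht). pose proof (pow_le 2 q ltac:(lra)).
  destruct (Rle_dec t 1).
  - assert ((1+t)^q <= 2^q) by (apply pow_incr; lra). nra.
  - assert (Hq : (1+t)^q <= (2*t)^q) by (apply pow_incr; lra).
    rewrite Rpow_mult_distr in Hq. nra.
Qed.

Lemma unif (G : R -> nat -> R -> R) m :
  (forall n, (n <= m)%nat -> exists c q, 0 <= c /\ forall lam x, 0 < lam <= 1 ->
      Rabs (G lam n x) <= c * (1 + Rabs x) ^ q) ->
  exists c q, 0 <= c /\ forall lam n x, 0 < lam <= 1 -> (n <= m)%nat ->
      Rabs (G lam n x) <= c * (1 + Rabs x) ^ q.
Proof.
  induction m; intros H.
  - destruct (H 0%nat ltac:(lia)) as [c [q [Hc Hb]]]. exists c, q; split; auto.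
    intros lam n x Hl Hn. replace n with 0%nat by lia. auto.
  - destruct IHm as [c1 [q1 [Hc1 Hb1]]]. { intros; apply H; lia. }
    destruct (H (S m) ltac:(lia)) as [c2 [q2 [Hc2 Hb2]]].
    exists (c1 + c2), (Nat.max q1 q2); split; [lra|].
    intros lam n x Hl Hn.
    assert (H1 : 1 <= 1 + Rabs x) by (pose proof (Rabs_pos x); lra).
    pose proof (Rle_pow _ q1 (Nat.max q1 q2) H1 ltac:(lia)).
    pose proof (Rle_pow _ q2 (Nat.max q1 q2) H1 ltac:(lia)).
    pose proof (pow_le (1 + Rabs x) q1 ltac:(lra)).
    pose proof (pow_le (1 + Rabs x) q2 ltac:(lra)).
    destruct (Nat.eq_dec n (S m)) as [->|Hne].
    + specialize (Hb2 lam x Hl). nra.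
    + specialize (Hb1 lam n x Hl ltac:(lia)). nra.
Qed.

Theorem lemma4p4 (m : nat) (f : R -> R) :
  Cm m f ->
  nondecreasing f ->
  (exists (C : R) (p : nat), forall (n : nat) (x : R), (n <= m)%nat ->
     Rabs (Derive_n f n x) <= C * (1 + Rabs x ^ p)) ->
  (* (i) *)
  (forall lam : R, 0 < lam -> Cm m (yosida f lam) /\ Cm m (resolvent f lam)) /\
  (* (ii) *)
  (exists (C : R) (q : nat), forall (lam : R) (n : nat) (x : R),
     0 < lam <= 1 -> (n <= m)%nat ->
     Rabs (Derive_n (yosida f lam) n x) <= C * (1 + Rabs x ^ q)) /\
  (* (iii) *)
  (forall (n : nat) (x : R), (n <= m)%nat ->
     filterlim (fun lam => Derive_n (yosida f lam) n x) (at_right 0)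
               (locally (Derive_n f n x))).
Proof.
  intros Hcm Hf [C [p Hb]].
  assert (Hyn : forall lam n x, 0 < lam -> (n <= m)%nat ->
     Derive_n (yosida f lam) n x = ev f lam (resolvent f lam x) (Nat.iter n Dx (EF 0))).
  { intros lam n x hl Hn. rewrite (yos_eq m f Hcm Hf lam hl).
    apply (Dn_J_e m f Hcm Hf); auto. }
  split; [|split].
  - intros lam hl. split.
    + rewrite (yos_eq m f Hcm Hf lam hl). apply (Cm_G m f Hcm Hf); auto.
    + change (Cm m (fun x => ev f lam (resolvent f lam x) EY)). apply (Cm_G m f Hcm Hf); auto.
  - set (A := Rabs (f 0)). set (B := 1 + 2 * Rabs C).
    assert (HB : 1 <= B) by (unfold B; pose proof (Rabs_pos C); lra).
    destruct (unif (fun lam n x => Derive_n (yosida f lam) n x) m) as [c [q [Hc Hu]]].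
    + intros n Hn.
      set (E := Nat.iter n Dx (EF 0)).
      exists (cb B E * ((1 + A) ^ S p) ^ db E), (S p * db E)%nat. split.
      { apply Rmult_le_pos. apply cb_pos; lra. apply pow_le, pow_le. unfold A; pose proof (Rabs_pos (f 0)); lra. }
      intros lam x Hl. rewrite Hyn by (lra || lia).
      set (y := resolvent f lam x).
      set (N := (1 + Rabs y) ^ S p).
      assert (Hy1 : 1 <= 1 + Rabs y) by (pose proof (Rabs_pos y); lra).
      assert (HN : 1 <= N) by (apply pow_R1_Rle; lra).
      assert (HyN : 1 + Rabs y <= N) by (unfold N; rewrite <- (pow_1 (1 + Rabs y)) at 1; apply Rle_pow; auto; lia).
      assert (HBN : N <= B * N) by nra.
      eapply Rle_trans.
      apply (bound_ev f B N lam y m E); auto; try lra.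
      * unfold E; pose proof (mi_iter n (EF 0)); simpl in *; lia.
      * rewrite Rabs_right; lra.
      * intros i Hi. eapply Rle_trans. apply Hb; auto.
        assert (Rabs y ^ p <= N).
        { unfold N. eapply Rle_trans. apply pow_incr. split. apply Rabs_pos.
          instantiate (1 := 1 + Rabs y). lra. apply Rle_pow; auto. }
        assert (C * (1 + Rabs y ^ p) <= Rabs C * (1 + Rabs y ^ p)).
        { apply Rmult_le_compat_r. pose proof (pow_le (Rabs y) p (Rabs_pos y)); lra. apply Rle_abs. }
        pose proof (Rabs_pos C). unfold B. nra.
      * intros H1. unfold Wf. pose proof (Dpos m f Hcm Hf y H1).
        rewrite Rabs_right.
        2: { apply Rle_ge, Rlt_le, Rinv_0_lt_compat. nra. }
        assert (/ (1 + lam * Derive_n f 1 y) <= 1).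
        { rewrite <- Rinv_1. apply Rinv_le_contravar; nra. }
        lra.
      * assert (Hy : Rabs y <= Rabs x + A).
        { unfold y, A. pose proof (res_bound f (fcont m f Hcm) Hf lam ltac:(lra) x).
          pose proof (Rabs_pos (f 0)). nra. }
        assert (HN2 : N <= ((1 + A) * (1 + Rabs x)) ^ S p).
        { unfold N. apply pow_incr. pose proof (Rabs_pos x); unfold A in *; pose proof (Rabs_pos (f 0)). split; nra. }
        rewrite Rpow_mult_distr in HN2.
        rewrite Rmult_assoc. apply Rmult_le_compat_l. apply cb_pos; lra.
        rewrite pow_mult, <- Rpow_mult_distr. apply pow_incr. split; [lra|exact HN2].
    + exists (c * 2 ^ q), q. intros lam n x Hl Hn.
      eapply Rle_trans. apply Hu; auto.
      pose proof (pow_split (Rabs x) q (Rabs_pos x)).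
      rewrite Rmult_assoc. apply Rmult_le_compat_l; auto.
  - intros n x Hn.
    rewrite <- (ev0 m f Hcm n Hn x).
    apply (filterlim_ext_loc (fun lam => ev f lam (resolvent f lam x) (Nat.iter n Dx (EF 0)))).
    { exists (mkposreal 1 Rlt_0_1). intros y _ Hy. symmetry. apply Hyn; auto. }
    apply (lim_ev f (at_right 0) (fun lam => lam) (fun lam => resolvent f lam x) 0 x m).
    + pose proof (mi_iter n (EF 0)); simpl in *; lia.
    + intros P [eps HP]. exists eps. intros y Hy _. apply HP. exact Hy.
    + apply filterlim_locally. intros eps.
      assert (Hd : 0 < eps / (1 + Rabs (f x))).
      { apply Rdiv_lt_0_compat. apply cond_pos. pose proof (Rabs_pos (f x)); lra. }
      exists (mkposreal _ Hd). intros y Hy Hy0.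
      pose proof (res_near f (fcont m f Hcm) Hf y Hy0 x).
      change (Rabs (resolvent f y x - x) < eps).
      change (Rabs (y - 0) < eps / (1 + Rabs (f x))) in Hy.
      rewrite Rminus_0_r, Rabs_right in Hy by lra.
      pose proof (Rabs_pos (f x)). pose proof (cond_pos eps).
      apply (Rmult_lt_compat_r (1 + Rabs (f x))) in Hy; [|lra].
      unfold Rdiv in Hy. rewrite Rmult_assoc, Rinv_l, Rmult_1_r in Hy by lra.
      nra.
    + intros; apply (Dn_cont m f Hcm); auto.
    + intros; rewrite Rmult_0_l; lra.
Qed.
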